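(* Let $g,h>\tfrac12$, let $\mathcal{D}=((d_1,t_1),\ldots,(d_M,t_M))$ be an ordered list of pairwise distinct seed labels for the parameters $(g,h)$, and let $\mathcal{D}'=((d_1,\bar t_1),\ldots,(d_M,\bar t_M))$, where $\bar{\mathrm{I}}=\mathrm{II}$ and $\bar{\mathrm{II}}=\mathrm{I}$ (so $\mathcal{D}'$ is a list of seed labels for the parameters $(h,g)$). Then for every $n\in\mathbb{Z}_{\ge0}$ and $-1<\eta<1$, $$P_{\mathcal{D},n}\big(-\eta;(g,h)\big)=(-1)^{n+\frac12M(M+1)+\sum_{k=1}^Md_k}\,P_{\mathcal{D}',n}\big(\eta;(h,g)\big),$$ $$\Xi_{\mathcal{D}}\big(-\eta;(g,h)\big)=(-1)^{\frac12M(M-1)+\sum_{k=1}^Md_k}\,\Xi_{\mathcal{D}'}\big(\eta;(h,g)\big).$$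
   Context: $[a]'$ denotes the greatest integer strictly less than $a$; $(a)_k=a(a+1)\cdots(a+k-1)$, $(a)_0=1$. For real $\alpha,\beta$, $m\in\mathbb{Z}_{\ge0}$, $P^{(\alpha,\beta)}_m(\eta)=\frac{1}{m!}\sum_{k=0}^m\frac{(-m)_k(m+\alpha+\beta+1)_k(\alpha+k+1)_{m-k}}{k!}\big(\frac{1-\eta}{2}\big)^k$. For parameters $(g,h)$ with $g,h>\frac12$, a seed label is a pair $(\mathrm{v},t)$, $t\in\{\mathrm{I},\mathrm{II}\}$, with $\mathrm{v}\in\{0,\ldots,[h-\frac12]'\}$ if $t=\mathrm{I}$ and $\mathrm{v}\in\{0,\ldots,[g-\frac12]'\}$ if $t=\mathrm{II}$. For $-1<\eta<1$ let $\mu_{(\mathrm{v},\mathrm{I})}(\eta;(g,h))=\big(\frac{1+\eta}{2}\big)^{\frac12-h}P^{(g-\frac12,\frac12-h)}_{\mathrm{v}}(\eta)$, $\mu_{(\mathrm{v},\mathrm{II})}(\eta;(g,h))=\big(\frac{1-\eta}{2}\big)^{\frac12-g}P^{(\frac12-g,h-\frac12)}_{\mathrm{v}}(\eta)$, $P_n(\eta;(g,h))=P^{(g-\frac12,h-\frac12)}_n(\eta)$, and $\mathrm{W}[f_1,\ldots,f_m](\eta)=\det\big(\frac{d^{j-1}f_k}{d\eta^{j-1}}\big)_{1\le j,k\le m}$. For an ordered list $\mathcal{D}=((d_1,t_1),\ldots,(d_M,t_M))$ of seed labels with $M_{\mathrm{I}}$ of Type I and $M_{\mathrm{II}}$ of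 Type II, $\Xi_{\mathcal{D}}(\eta;(g,h))=\mathrm{W}[\mu_{(d_1,t_1)},\ldots,\mu_{(d_M,t_M)}](\eta)\big(\frac{1-\eta}{2}\big)^{(M_{\mathrm{I}}+g-\frac12)M_{\mathrm{II}}}\big(\frac{1+\eta}{2}\big)^{(M_{\mathrm{II}}+h-\frac12)M_{\mathrm{I}}}$ and $P_{\mathcal{D},n}(\eta;(g,h))=\mathrm{W}[\mu_{(d_1,t_1)},\ldots,\mu_{(d_M,t_M)},P_n](\eta)\big(\frac{1-\eta}{2}\big)^{(M_{\mathrm{I}}+g+\frac12)M_{\mathrm{II}}}\big(\frac{1+\eta}{2}\big)^{(M_{\mathrm{II}}+h+\frac12)M_{\mathrm{I}}}$, where all $\mu$'s and $P_n$ are taken at parameters $(g,h)$ (the multi-indexed Jacobi polynomials). These are polynomials in $\eta$, so they may be evaluated at $-\eta$. *)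

(* Defs.v *)
From HB Require Import structures.
From mathcomp Require Import all_boot all_order all_algebra.
From mathcomp Require Import all_classical all_reals all_analysis.
Set Implicit Arguments. Unset Strict Implicit. Unset Printing Implicit Defensive.
Import Order.TTheory GRing.Theory Num.Theory.
Local Open Scope ring_scope.

Inductive stype := TI | TII.
Definition stype_eqb (a b : stype) : bool :=
  match a, b with TI, TI | TII, TII => true | _, _ => false end.
Lemma stype_eqP : Equality.axiom stype_eqb.
Proof. by case; case; constructor. Qed.
HB.instance Definition _ := hasDecEq.Build stype stype_eqP.

Definition sflip (t : stype) : stype := match t with TI => TII | TII => TI end.

Section Defs.
Variable R : realType.

Definition glt (a : R) : int := (Num.ceil a - 1)%R.

Definition poch (a : R) (k : nat) : R := \prod_(i < k) (a + i%:R).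

Definition jacobiP (al be : R) (m : nat) (eta : R) : R :=
  (m`!%:R)^-1 * \sum_(k < m.+1)
     poch (- m%:R) k * poch (m%:R + al + be + 1) k * poch (al + k%:R + 1) (m - k)
       / (k`!%:R) * ((1 - eta) / 2) ^+ k.

Definition seed_label (g h : R) (l : nat * stype) : Prop :=
  match l.2 with
  | TI => ((l.1)%:Z <= glt (h - 2^-1))%R
  | TII => ((l.1)%:Z <= glt (g - 2^-1))%R
  end.

Definition mu (g h : R) (l : nat * stype) : R -> R :=
  match l.2 with
  | TI => fun eta => powR ((1 + eta) / 2) (2^-1 - h) * jacobiP (g - 2^-1) (2^-1 - h) l.1 eta
  | TII => fun eta => powR ((1 - eta) / 2) (2^-1 - g) * jacobiP (2^-1 - g) (h - 2^-1) l.1 eta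
  end.

Definition Pn (g h : R) (n : nat) : R -> R :=
  fun eta => jacobiP (g - 2^-1) (h - 2^-1) n eta.

Definition wronskian (fs : seq (R -> R)) (eta : R) : R :=
  \det (\matrix_(j < size fs, k < size fs) derive1n j (nth (fun _ => 0) fs k) eta).

Definition MI (D : seq (nat * stype)) : nat := count (fun l => l.2 == TI) D.
Definition MII (D : seq (nat * stype)) : nat := count (fun l => l.2 == TII) D.

Definition Xi (g h : R) (D : seq (nat * stype)) (eta : R) : R :=
  wronskian (map (mu g h) D) eta
  * powR ((1 - eta) / 2) (((MI D)%:R + g - 2^-1) * (MII D)%:R)
  * powR ((1 + eta) / 2) (((MII D)%:R + h - 2^-1) * (MI D)%:R).

Definition PD (g h : R) (D : seq (nat * stype)) (n : nat) (eta : R) : R :=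
  wronskian (rcons (map (mu g h) D) (Pn g h n)) eta
  * powR ((1 - eta) / 2) (((MI D)%:R + g + 2^-1) * (MII D)%:R)
  * powR ((1 + eta) / 2) (((MII D)%:R + h + 2^-1) * (MI D)%:R).

End Defs.

Definition flipD (D : seq (nat * stype)) : seq (nat * stype) :=
  map (fun l => (l.1, sflip l.2)) D.

(* Main.v *)
Require Import Defs.
From HB Require Import structures.
From mathcomp Require Import all_boot all_order all_algebra.
From mathcomp Require Import all_classical all_reals all_analysis.
From mathcomp Require Import ring lra.
Import Order.TTheory GRing.Theory Num.Theory.
Local Open Scope ring_scope.
Section Alg.
Variable R : realType.
Definition ff (x : R) (n : nat) : R := \prod_(i < n) (x - i%:R).

Lemma ffS x n : ff x n.+1 = x * ff (x - 1) n.
Proof.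
rewrite /ff big_ord_recl /= subr0; congr (_ * _); apply: eq_bigr => i _.
by rewrite /bump /= add1n -nat1r opprD addrA.
Qed.

Lemma ffSr x n : ff x n.+1 = ff x n * (x - n%:R).
Proof. by rewrite /ff big_ord_recr. Qed.

Lemma ff0 x : ff x 0 = 1.
Proof. by rewrite /ff big_ord0. Qed.

Lemma poch_ff (a : R) k : poch a k = (-1) ^+ k * ff (- a) k.
Proof.
rewrite /poch /ff.
rewrite (eq_bigr (fun i : 'I_k => - (- a - i%:R))); last by move=> i _; rewrite opprB opprK addrC.
by rewrite prodrN card_ord.
Qed.

Lemma pochSr (a : R) k : poch a k.+1 = poch a k * (a + k%:R).
Proof. by rewrite /poch big_ord_recr. Qed.

Lemma poch_rev (z : R) p : poch z p = ff (z + p%:R - 1) p.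
Proof.
elim: p z => [|p IH] z; first by rewrite /poch /ff !big_ord0.
by rewrite pochSr IH ffS -natr1 addrA addrK mulrC.
Qed.

Lemma vandermonde n : forall x y : R,
  ff (x + y) n = \sum_(i < n.+1) ('C(n, i))%:R * ff x i * ff y (n - i).
Proof.
elim: n => [|n IH] x y.
  by rewrite big_ord1 !ff0 bin0 !mulr1.
rewrite ffS.
have -> : x + y - 1 = (x - 1) + y by rewrite addrAC.
have E1 : x * ff (x - 1 + y) n = \sum_(i < n.+1) ('C(n, i))%:R * ff x i.+1 * ff y (n - i).
  rewrite IH mulr_sumr; apply: eq_bigr => i _.
  by rewrite ffS; ring.
have E2 : y * ff (x - 1 + y) n = \sum_(i < n.+1) ('C(n, i))%:R * ff x i * ff y (n - i).+1.
  have -> : x - 1 + y = x + (y - 1) by rewrite addrAC addrA.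
  rewrite IH mulr_sumr; apply: eq_bigr => i _.
  by rewrite ffS; ring.
rewrite mulrDl E1 E2 [RHS]big_ord_recl /= bin0 ff0 mul1r subn0.
under [X in _ = _ + X]eq_bigr => i _ do rewrite /bump /= add1n subSS binS natrD !mulrDl.
rewrite big_split /= addrA [in RHS]addrC; congr (_ + _).
rewrite [LHS]big_ord_recl /= bin0 ff0 !mul1r subn0.
rewrite [in RHS]big_ord_recr /= bin_small // mul0r !mul0r addr0; congr (_ + _).
apply: eq_bigr => i _.
by rewrite /bump /= add1n subnSK.
Qed.

Lemma ff_nat n i : ff n%:R i = (n ^_ i)%:R.
Proof.
elim: i => [|i IH]; first by rewrite ff0 ffactn0.
rewrite ffSr IH ffactnSr natrM.
case: (leqP i n) => hin; first by rewrite natrB.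
by rewrite ffact_small // !mul0r.
Qed.

Lemma poch_add (z : R) p q : poch z (p + q) = poch z p * poch (z + p%:R) q.
Proof.
elim: q => [|q IH]; first by rewrite addn0 /poch big_ord0 mulr1.
by rewrite addnS !pochSr IH natrD addrA mulrA.
Qed.

Lemma fact_neq0 k : (k`!%:R : R) != 0.
Proof. by rewrite pnatr_eq0 -lt0n fact_gt0. Qed.

Lemma CV n (c d : R) :
  \sum_(i < n.+1) poch (- n%:R) i / (i`!%:R) * poch (n%:R + c + d - 1) i
      * poch (c + i%:R) (n - i)
  = (-1) ^+ n * poch d n.
Proof.
have E : (-1) ^+ n * poch d n = ff (- (n%:R + c + d - 1) + (c + n%:R - 1)) n.
  rewrite poch_ff mulrA -expr2 sqrr_sign mul1r; congr ff.
  by rewrite !opprD !opprK; ring.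
rewrite E vandermonde; apply: eq_bigr => i _.
have hi : (i <= n)%N by rewrite -ltnS.
rewrite poch_ff opprK ff_nat -bin_ffact natrM.
rewrite poch_ff poch_rev.
have -> : c + i%:R + (n - i)%:R - 1 = c + n%:R - 1.
  by rewrite natrB //; ring.
have := fact_neq0 i => hf.
rewrite (mulrA ((-1) ^+ i)) mulfK //.
by rewrite mulrACA -expr2 sqrr_sign mul1r.
Qed.

Definition JA (al be : R) (m k : nat) : R :=
  poch (- m%:R) k * poch (m%:R + al + be + 1) k * poch (al + k%:R + 1) (m - k)
   / (k`!%:R).

Lemma KC (a b : R) m j : (j <= m)%N ->
  \sum_(k < m.+1) JA a b m k * ('C(k, j))%:R * (-1) ^+ j = (-1) ^+ m * JA b a m j.
Proof.
move=> hj; move: (subnK hj); move: (m - j)%N => n Em; subst m.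
rewrite -(big_mkord xpredT (fun k => JA a b (n + j) k * ('C(k, j))%:R * (-1) ^+ j)).
rewrite (@big_cat_nat _ _ _ j) //=; last by rewrite -addSn leq_addl.
rewrite big_nat_cond big1 ?add0r; last first.
  by move=> k /andP [/andP [_ hk] _]; rewrite bin_small // mulr0 mul0r.
rewrite -{1}(add0n j) big_addn -addSn addnK big_mkord.
pose K := poch (- (n + j)%:R) j * poch ((n + j)%:R + a + b + 1) j / (j`!%:R) * (-1) ^+ j.
have -> : \sum_(i < n.+1) JA a b (n + j) (i + j) * ('C(i + j, j))%:R * (-1) ^+ j
   = K * \sum_(i < n.+1) poch (- n%:R) i / (i`!%:R) * poch (n%:R + (a + j%:R + 1) + (b + j%:R + 1) - 1) i
      * poch ((a + j%:R + 1) + i%:R) (n - i).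
  rewrite mulr_sumr; apply: eq_bigr => i _.
  rewrite /JA /K (addnC i j) !poch_add.
  have -> : ((j + i)`!%:R : R) = ('C(j + i, j))%:R * (j`!%:R * i`!%:R).
    by have := bin_fact (leq_addr i j); rewrite addKn => <-; rewrite !natrM.
  have -> : - (n + j)%:R + j%:R = - (n%:R : R) by rewrite natrD opprD addrNK.
  have -> : (n + j)%:R + a + b + 1 + j%:R = n%:R + (a + j%:R + 1) + (b + j%:R + 1) - 1.
    by rewrite natrD; ring.
  have -> : a + (j + i)%:R + 1 = a + j%:R + 1 + i%:R by rewrite natrD; ring.
  rewrite (addnC j i) subnDr.
  have hC : ('C(i + j, j))%:R != 0 :> R by rewrite pnatr_eq0 -lt0n bin_gt0 leq_addl.
  rewrite ?(addnC j i).
  have := fact_neq0 i; have := fact_neq0 j.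
  move: ((-1) ^+ j) => s hj0 hi0.
  field.
  by rewrite hC hj0 hi0.
rewrite CV /K /JA addnK exprD.
move: ((-1) ^+ j) ((-1) ^+ n) => s t.
have -> : (n + j)%:R + b + a + 1 = (n + j)%:R + a + b + 1 :> R by ring.
ring.
Qed.

Lemma jacobiE (al be : R) m y :
  jacobiP al be m y = (m`!%:R)^-1 * \sum_(k < m.+1) JA al be m k * ((1 - y) / 2) ^+ k.
Proof. by []. Qed.

Lemma expand (t : R) k m : (k <= m)%N ->
  (1 - t) ^+ k = \sum_(j < m.+1) ('C(k, j))%:R * (-1) ^+ j * t ^+ j.
Proof.
move=> hk; rewrite exprDn (big_ord_widen m.+1 (fun j => 1 ^+ (k - j) * (- t) ^+ j *+ 'C(k, j))) //.
rewrite big_mkcond; apply: eq_bigr => j _.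
case: ifP => hj.
  by rewrite expr1n mul1r -mulr_natl -mulrA -exprMn mulN1r.
have hkj : (k < j)%N by rewrite ltnNge -ltnS hj.
by rewrite bin_small // !mul0r.
Qed.

Lemma jacobi_sym (al be : R) m x : jacobiP al be m (- x) = (-1) ^+ m * jacobiP be al m x.
Proof.
rewrite !jacobiE.
have -> : (1 - - x) / 2 = 1 - (1 - x) / 2 :> R.
  by rewrite opprK; field.
move: ((1 - x) / 2) => t.
rewrite mulrCA; congr (_ * _).
under eq_bigr => k _ do rewrite (@expand t k m (ltnSE (ltn_ord k))) mulr_sumr.
rewrite exchange_big /= mulr_sumr; apply: eq_bigr => j _.
rewrite mulrA -KC; last by rewrite -ltnS.
rewrite mulr_suml; apply: eq_bigr => k _.
by rewrite !mulrA.
Qed.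




Lemma derivable_neg (G : R -> R) x : derivable G (-x) 1 -> derivable (fun y => G (-y)) x 1.
Proof.
move=> dG; apply/derivable1_diffP.
have -> : (fun y => G (-y)) = G \o -%R by [].
apply: differentiable_comp; last exact/derivable1_diffP.
exact/derivable1_diffP/derivable_opp.
Qed.

Lemma derive1_neg (G : R -> R) c x :
  derive1 (fun y => c * G (-y)) x = - c * derive1 G (- x).
Proof.
have [dG|ndG] := pselect (derivable G (-x) 1).
  rewrite derive1Ml; last exact: derivable_neg.
  have -> : (fun y => G (-y)) = G \o -%R by [].
  rewrite derive1_comp //.
  have -> : derive1 (-%R : R -> R) x = -1.
    by rewrite derive1E deriveN ?derive_id //; exact: derivable_id.
  by rewrite mulrN1 mulrN mulNr.
have [->|c0] := eqVneq c 0.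
  have -> : (fun y => 0 * G (-y)) = cst 0 by apply/funext => y; rewrite mul0r.
  by rewrite derive1_cst oppr0 mul0r.
have ndF : ~ derivable (fun y => c * G (-y)) x 1.
  move=> dF; apply: ndG.
  have -> : G = fun z => c^-1 * (fun y => c * G (-y)) (- z).
    by apply/funext => z /=; rewrite opprK mulKf.
  have := @derivable_neg (fun y => c * G (-y)) (- x); rewrite opprK => /(_ dF) dF'.
  have := derivableZ (k := c^-1) dF'.
  by [].
have e1 := dvgP ndF; have e2 := dvgP ndG.
rewrite !derive1E /derive.
rewrite e1 e2.
by rewrite (_ : point = 0) ?mulr0.
Qed.

Lemma derive1n_neg (G : R -> R) c j :
  derive1n j (fun y => c * G (- y)) = fun x => ((-1) ^+ j * c) * derive1n j G (- x).
Proof.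
elim: j => [|j IH]; first by apply/funext => x; rewrite expr0 mul1r.
change (derive1 (derive1n j (fun y => c * G (- y))) = fun x => ((-1) ^+ j.+1 * c) * derive1 (derive1n j G) (- x)).
rewrite IH; apply/funext => x.
by rewrite derive1_neg exprS !mulN1r mulNr.
Qed.

Lemma mu_sym (g h : R) l : mu g h l = fun y => (-1) ^+ l.1 * mu h g (l.1, sflip l.2) (- y).
Proof.
case: l => v [] /=; apply/funext => y; rewrite /mu /= ?opprK jacobi_sym.
  by rewrite [RHS]mulrCA [in RHS](mulrA ((-1) ^+ v)) -expr2 sqrr_sign mul1r.
  by rewrite [RHS]mulrCA [in RHS](mulrA ((-1) ^+ v)) -expr2 sqrr_sign mul1r.
Qed.

Lemma Pn_sym (g h : R) n : Pn g h n = fun y => (-1) ^+ n * Pn h g n (- y).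
Proof.
apply/funext => y; rewrite /Pn jacobi_sym mulrA -expr2 sqrr_sign mul1r.
by [].
Qed.

Lemma wr_neg (ps : seq (R * (R -> R))) eta :
  wronskian (map (fun p => fun y => p.1 * p.2 (- y)) ps) (- eta)
  = (-1) ^+ 'C(size ps, 2) * \prod_(p <- ps) p.1 * wronskian (map snd ps) eta.
Proof.
rewrite /wronskian !size_map.
set n := size ps.
pose p0 : R * (R -> R) := (0, fun _ => 0).
have -> : (\matrix_(j < n, k < n) derive1n j (nth (fun _ => 0) (map (fun p => fun y => p.1 * p.2 (- y)) ps) k) (- eta))
   = diag_mx (\row_(j < n) (-1) ^+ j) *m (\matrix_(j < n, k < n) derive1n j (nth (fun _ => 0) (map snd ps) k) eta)
     *m diag_mx (\row_(k < n) (nth p0 ps k).1).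
  apply/matrixP => j k; rewrite mul_mx_diag mul_diag_mx !mxE.
  rewrite (nth_map p0) // (nth_map p0) // derive1n_neg opprK.
  by rewrite mulrAC.
rewrite (det_mulmx (R:=R)) (det_mulmx (R:=R)) !det_diag.
have -> : \prod_(i < n) (\row_(j < n) (-1) ^+ j : 'rV[R]_n) 0 i = (-1) ^+ 'C(n, 2).
  under eq_bigr => i _ do rewrite mxE.
  by rewrite prodrXr -bin2_sum big_mkord.
rewrite (eq_bigr (fun i : 'I_n => (nth p0 ps i).1)); last by move=> i _; rewrite mxE.
rewrite -(big_mkord xpredT (fun i => (nth p0 ps i).1)) -(big_nth p0 xpredT (fun p => p.1)).
by rewrite mulrAC.
Qed.
End Alg.

Theorem mainTheorem5 (R : realType) (g h : R) (D : seq (nat * stype)) :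
  2^-1 < g -> 2^-1 < h ->
  (forall l, l \in D -> seed_label g h l) ->
  uniq D ->
  (forall (n : nat) (eta : R), -1 < eta < 1 ->
     PD g h D n (- eta) =
     (-1) ^+ (n + (size D * (size D).+1)./2 + \sum_(l <- D) l.1)%N
       * PD h g (flipD D) n eta)
  /\
  (forall eta : R, -1 < eta < 1 ->
     Xi g h D (- eta) =
     (-1) ^+ ((size D * (size D).-1)./2 + \sum_(l <- D) l.1)%N
       * Xi h g (flipD D) eta).
Proof.
move=> _ _ _ _.
pose F := fun l : nat * stype => ((-1) ^+ l.1 : R, mu h g (l.1, sflip l.2)).
pose Fn := fun p : R * (R -> R) => fun y => p.1 * p.2 (- y).
have Hmap : map (mu g h) D = map Fn (map F D).
  by rewrite -map_comp; apply: eq_map => l; rewrite /= mu_sym.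
have Hsnd : map snd (map F D) = map (mu h g) (flipD D).
  by rewrite /flipD -!map_comp.
have Hprod : \prod_(p <- map F D) p.1 = (-1) ^+ (\sum_(l <- D) l.1).
  by rewrite big_map prodrXr.
have HMI : MI (flipD D) = MII D.
  by rewrite /MI /MII /flipD count_map; apply: eq_count => -[v []].
have HMII : MII (flipD D) = MI D.
  by rewrite /MI /MII /flipD count_map; apply: eq_count => -[v []].
split.
  move=> n eta _.
  rewrite /PD Hmap (@Pn_sym R g h n).
  have -> : rcons (map Fn (map F D)) (fun y => (-1) ^+ n * Pn h g n (- y))
      = map Fn (rcons (map F D) ((-1) ^+ n, Pn h g n)) by rewrite map_rcons.
  rewrite wr_neg map_rcons Hsnd size_rcons size_map.
  rewrite -cats1 big_cat big_seq1 /= Hprod.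
  rewrite HMI HMII !opprK bin2 /=.
  rewrite [((size D).+1 * _)%N]mulnC !exprD.
  move: ((-1) ^+ n : R) ((-1) ^+ (\sum_(l <- D) l.1) : R) ((-1) ^+ (size D * (size D).+1)./2 : R) => a b c.
  ring.
move=> eta _.
rewrite /Xi Hmap wr_neg Hsnd size_map Hprod HMI HMII !opprK bin2.
rewrite !exprD.
move: ((-1) ^+ (\sum_(l <- D) l.1) : R) ((-1) ^+ (size D * (size D).-1)./2 : R) => a b.
ring.
Qed.
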